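(* Let $I\in\mathbb S$ and $\xi\in\mathbb{O}$. Then: (1) $N(g_{I,\xi})(x)=|\Delta_{\xi_I}(x)|^2+2|\xi_I^\perp|^2\big(|x|^2-2\mathrm{Re}(x)\mathrm{Re}(\xi_I)+|\xi_I|^2\big)+|\xi_I^\perp|^4\ge0$ for every $x\in\mathbb{O}$; (2) the zero set of $N(g_{I,\xi})$ equals $\mathbb S_{I,\xi}$.
   Context: Octonions $\mathbb{O}=\mathbb{H}+\ell\mathbb{H}$ (product $(a+\ell b)(c+\ell d)=(ac-d\bar b)+\ell(\bar a d+cb)$, conjugation $\overline{a+\ell b}=\bar a-\ell b$), identified with $\mathbb{R}^8$ with Euclidean norm; $\mathrm{Re}(x)=\frac12(x+\bar x)$, $\mathrm{Im}(x)=\frac12(x-\bar x)$; $\mathbb S=\{I:I^2=-1\}$, $\mathbb C_I=\mathrm{Span}_{\mathbb R}(1,I)$. Slice functions on $\mathbb{O}$: $f(\alpha+\beta J)=F_1(\alpha,\beta)+JF_2(\alpha,\beta)$ ($J\in\mathbb S$) for a stem function $(F_1,F_2):\mathbb{R}^2\to\mathbb{O}^2$, $F_1$ even and $F_2$ odd in $\beta$. The slice product $f\cdot g$ of slice functions induced by $(F_1,F_2),(G_1,G_2)$ is induced by $(F_1G_1-F_2G_2,F_1G_2+F_2G_1)$; $f^c$ is induced by $(\overline{F_1},\overline{F_2})$; the normal function is $N(f)=f\cdot f^c$. For $\eta\in\mathbb{O}$, $\Delta_\eta(x)=x^2-2x\mathrm{Re}(\eta)+|\eta|^2$ and $\mathbb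 S_\eta=\{\mathrm{Re}(\eta)+J|\mathrm{Im}(\eta)|:J\in\mathbb S\}$. For $\xi\in\mathbb{O}$: $\xi_I$ is the orthogonal projection of $\xi$ onto $\mathbb C_I$, $\xi_I^\perp=\xi-\xi_I$, $g_{I,\xi}:\mathbb{O}\to\mathbb{O}$ is the slice function $g_{I,\xi}(x)=|x|^2-x\overline{\xi_I}-\overline{x}\xi_I+|\xi|^2$ (equal to $(\xi_I-x)\cdot(\overline{\xi_I}-\overline x)+|\xi_I^\perp|^2$), and $\mathbb S_{I,\xi}=\mathbb S_\xi$ if $\xi\in\mathbb C_I$, $\mathbb S_{I,\xi}=\emptyset$ otherwise. *)

(* Defs.v *)
From mathcomp Require Import all_boot all_order all_algebra.
Set Implicit Arguments. Unset Strict Implicit. Unset Printing Implicit Defensive.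
Import Order.TTheory GRing.Theory Num.Theory.
Local Open Scope ring_scope.

Section Oct.
Variable R : rcfType.

(* Quaternions H = R^4 with basis 1, i, j, k. *)
Record quat := Quat { q0 : R; q1 : R; q2 : R; q3 : R }.

Definition qadd (a b : quat) :=
  Quat (q0 a + q0 b) (q1 a + q1 b) (q2 a + q2 b) (q3 a + q3 b).
Definition qopp (a : quat) := Quat (- q0 a) (- q1 a) (- q2 a) (- q3 a).
Definition qmul (a b : quat) :=
  Quat (q0 a * q0 b - q1 a * q1 b - q2 a * q2 b - q3 a * q3 b)
       (q0 a * q1 b + q1 a * q0 b + q2 a * q3 b - q3 a * q2 b)
       (q0 a * q2 b - q1 a * q3 b + q2 a * q0 b + q3 a * q1 b)
       (q0 a * q3 b + q1 a * q2 b - q2 a * q1 b + q3 a * q0 b).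
Definition qconj (a : quat) := Quat (q0 a) (- q1 a) (- q2 a) (- q3 a).
Definition qreal (r : R) := Quat r 0 0 0.

(* Octonions O = H + l H, the pair (a, b) standing for a + l b. *)
Record oct := Oct { oa : quat; ob : quat }.

Definition oadd (x y : oct) := Oct (qadd (oa x) (oa y)) (qadd (ob x) (ob y)).
Definition oopp (x : oct) := Oct (qopp (oa x)) (qopp (ob x)).
Definition osub (x y : oct) := oadd x (oopp y).
(* (a + l b)(c + l d) = (ac - d conj(b)) + l (conj(a) d + c b) *)
Definition omul (x y : oct) :=
  Oct (qadd (qmul (oa x) (oa y)) (qopp (qmul (ob y) (qconj (ob x)))))
      (qadd (qmul (qconj (oa x)) (ob y)) (qmul (oa y) (ob x))).
Definition oconj (x : oct) := Oct (qconj (oa x)) (qopp (ob x)).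
Definition oreal (r : R) := Oct (qreal r) (qreal 0).
Definition oscale (r : R) (x : oct) := omul (oreal r) x.
Definition ozero := oreal 0.

Definition ocoords (x : oct) : seq R :=
  [:: q0 (oa x); q1 (oa x); q2 (oa x); q3 (oa x);
      q0 (ob x); q1 (ob x); q2 (ob x); q3 (ob x)].
Definition odot (x y : oct) : R :=
  \sum_(i < 8) nth 0 (ocoords x) i * nth 0 (ocoords y) i.
Definition onorm (x : oct) : R := Num.sqrt (odot x x).

Definition oRe (x : oct) := oscale (2^-1) (oadd x (oconj x)).
Definition oIm (x : oct) := oscale (2^-1) (osub x (oconj x)).
Definition reR (x : oct) : R := q0 (oa (oRe x)).

Definition Sph : oct -> Prop := fun I => omul I I = oreal (-1).
Definition inCI (I x : oct) : Prop := exists a b : R, x = oadd (oreal a) (oscale b I).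

Definition Delta (eta x : oct) :=
  oadd (osub (omul x x) (omul x (oscale 2 (oRe eta)))) (oreal (onorm eta ^+ 2)).
Definition Seta (eta : oct) : oct -> Prop := fun y =>
  exists J, Sph J /\ y = oadd (oRe eta) (omul J (oreal (onorm (oIm eta)))).

(* xi_I : orthogonal projection of xi onto C_I; for I in S, (1, I) is an
   orthonormal basis of C_I, so the projection is <xi,1> 1 + <xi,I> I. *)
Definition projI (I xi : oct) := oadd (oreal (odot xi (oreal 1))) (oscale (odot xi I) I).
Definition perpI (I xi : oct) := osub xi (projI I xi).

Definition gIxi (I xi : oct) (x : oct) :=
  oadd (osub (osub (oreal (onorm x ^+ 2)) (omul x (oconj (projI I xi))))
             (omul (oconj x) (projI I xi)))
       (oreal (onorm xi ^+ 2)).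

Definition SIxi (I xi : oct) : oct -> Prop := fun y => inCI I xi /\ Seta xi y.

Definition stem (F1 F2 : R -> R -> oct) : Prop :=
  (forall a b, F1 a (- b) = F1 a b) /\ (forall a b, F2 a (- b) = oopp (F2 a b)).

Definition induced (f : oct -> oct) (F1 F2 : R -> R -> oct) : Prop :=
  forall (a b : R) (J : oct), Sph J ->
    f (oadd (oreal a) (oscale b J)) = oadd (F1 a b) (omul J (F2 a b)).

(* The slice function induced by (F1, F2), as an explicit function:
   x = Re x + |Im x| J with J = Im x / |Im x| when x is not real. *)
Definition slice (F1 F2 : R -> R -> oct) (x : oct) : oct :=
  let b := onorm (oIm x) in
  if b == 0 then F1 (reR x) 0
  else oadd (F1 (reR x) b) (omul (oscale b^-1 (oIm x)) (F2 (reR x) b)).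

(* stem of the slice product f . g : (F1 G1 - F2 G2, F1 G2 + F2 G1) *)
Definition sprod1 (F1 F2 G1 G2 : R -> R -> oct) a b :=
  osub (omul (F1 a b) (G1 a b)) (omul (F2 a b) (G2 a b)).
Definition sprod2 (F1 F2 G1 G2 : R -> R -> oct) a b :=
  oadd (omul (F1 a b) (G2 a b)) (omul (F2 a b) (G1 a b)).
Definition cstem (F : R -> R -> oct) a b := oconj (F a b).

Definition normalf (F1 F2 : R -> R -> oct) : oct -> oct :=
  slice (sprod1 F1 F2 (cstem F1) (cstem F2)) (sprod2 F1 F2 (cstem F1) (cstem F2)).

End Oct.

(* Main.v *)
Require Import Defs.
From mathcomp Require Import all_boot all_order all_algebra.
From mathcomp Require Import ring lra.
From Stdlib Require Import FunctionalExtensionality.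
Import Order.TTheory GRing.Theory Num.Theory.
Local Open Scope ring_scope.
Set Implicit Arguments. Unset Strict Implicit.

Section S1.
Variable R : rcfType.
Implicit Types x y c xi I J : oct R.
Definition im2 x : R := q1 (oa x) ^+ 2 + q2 (oa x) ^+ 2 + q3 (oa x) ^+ 2
  + q0 (ob x) ^+ 2 + q1 (ob x) ^+ 2 + q2 (ob x) ^+ 2 + q3 (ob x) ^+ 2.

Lemma qaddE a0 a1 a2 a3 b0 b1 b2 b3 : qadd (Quat a0 a1 a2 a3) (Quat b0 b1 b2 b3) =
  Quat (a0 + b0) (a1 + b1) (a2 + b2) (a3 + b3) :> quat R.
Proof. by []. Qed.
Lemma qoppE a0 a1 a2 a3 : qopp (Quat a0 a1 a2 a3) = Quat (- a0) (- a1) (- a2) (- a3) :> quat R.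
Proof. by []. Qed.
Lemma qconjE a0 a1 a2 a3 : qconj (Quat a0 a1 a2 a3) = Quat a0 (- a1) (- a2) (- a3) :> quat R.
Proof. by []. Qed.
Lemma qmulE a0 a1 a2 a3 b0 b1 b2 b3 : qmul (Quat a0 a1 a2 a3) (Quat b0 b1 b2 b3) =
  Quat (a0 * b0 - a1 * b1 - a2 * b2 - a3 * b3)
       (a0 * b1 + a1 * b0 + a2 * b3 - a3 * b2)
       (a0 * b2 - a1 * b3 + a2 * b0 + a3 * b1)
       (a0 * b3 + a1 * b2 - a2 * b1 + a3 * b0) :> quat R.
Proof. by []. Qed.
Lemma qrealE r : qreal r = Quat r 0 0 0 :> quat R. Proof. by []. Qed.
Lemma omulE u v w z : omul (Oct u v) (Oct w z) =
  Oct (qadd (qmul u w) (qopp (qmul z (qconj v)))) (qadd (qmul (qconj u) z) (qmul w v)) :> oct R.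
Proof. by []. Qed.
Lemma oaddE u v w z : oadd (Oct u v) (Oct w z) = Oct (qadd u w) (qadd v z) :> oct R.
Proof. by []. Qed.
Lemma ooppE a b : oopp (Oct a b) = Oct (qopp a) (qopp b) :> oct R. Proof. by []. Qed.
Lemma oconjE a b : oconj (Oct a b) = Oct (qconj a) (qopp b) :> oct R. Proof. by []. Qed.
Lemma orealE r : oreal r = Oct (qreal r) (qreal 0) :> oct R. Proof. by []. Qed.

End S1.

Ltac octd x := let a := fresh "a" in let b := fresh "b" in case: x => [[a ? ? ?] [b ? ? ?]].
Ltac osimpl := rewrite ?/osub ?/oscale ?/ozero ?orealE ?qrealE;
  repeat (rewrite ?omulE ?oaddE ?ooppE ?oconjE ?qaddE ?qoppE ?qconjE ?qmulE).
Ltac pr := cbn [q0 q1 q2 q3 oa ob].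
Ltac ored := cbv beta iota delta [omul oadd oopp oconj osub oscale oreal ozero qadd qmul qconj qopp qreal oa ob q0 q1 q2 q3].
Ltac oring := ored; congr (Oct (Quat _ _ _ _) (Quat _ _ _ _)); ring.

Section S2.
Variable R : rcfType.
Implicit Types x y c xi I J : oct R.
Lemma odotE x y : odot x y =
  q0 (oa x) * q0 (oa y) + q1 (oa x) * q1 (oa y) + q2 (oa x) * q2 (oa y) + q3 (oa x) * q3 (oa y)
  + q0 (ob x) * q0 (ob y) + q1 (ob x) * q1 (ob y) + q2 (ob x) * q2 (ob y) + q3 (ob x) * q3 (ob y).
Proof. rewrite /odot !big_ord_recl big_ord0 /=. ring. Qed.

Lemma odotxx x : odot x x = q0 (oa x) ^+ 2 + im2 x.
Proof. rewrite odotE /im2. ring. Qed.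

Lemma im2_ge0 x : 0 <= im2 x.
Proof. rewrite /im2. by rewrite !addr_ge0 // sqr_ge0. Qed.

Lemma odot_ge0 x : 0 <= odot x x.
Proof. by rewrite odotxx addr_ge0 ?sqr_ge0 ?im2_ge0. Qed.

Lemma onorm2 x : onorm x ^+ 2 = odot x x.
Proof. by rewrite /onorm sqr_sqrtr // odot_ge0. Qed.

Lemma two_neq0 : (2 : R) != 0.
Proof. by rewrite pnatr_eq0. Qed.

Lemma oReE x : oRe x = oreal (q0 (oa x)).
Proof. octd x. rewrite /oRe. osimpl. congr (Oct (Quat _ _ _ _) (Quat _ _ _ _)); pr;
  by field. Qed.

Lemma reRE x : reR x = q0 (oa x).
Proof. by rewrite /reR oReE. Qed.

Lemma oImE x : oIm x = Oct (Quat 0 (q1 (oa x)) (q2 (oa x)) (q3 (oa x))) (ob x).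
Proof. octd x. rewrite /oIm. osimpl. congr (Oct (Quat _ _ _ _) (Quat _ _ _ _)); pr;
  by field. Qed.

Lemma im2_oIm x : odot (oIm x) (oIm x) = im2 x.
Proof. rewrite oImE odotE /im2; pr; ring. Qed.

Lemma alt I y : omul I (omul I y) = omul (omul I I) y.
Proof. octd I. octd y. oring. Qed.

Lemma sph_coords J : Sph J -> q0 (oa J) = 0 /\ im2 J = 1.
Proof.
case: J => [[j0 j1 j2 j3] [j4 j5 j6 j7]]; rewrite /Sph /im2; pr; osimpl.
case=> e0 e1 e2 e3 e4 e5 e6 e7.
have h1 : 2 * (j0 * j1) = 0 by apply: etrans e1; ring.
have h2 : 2 * (j0 * j2) = 0 by apply: etrans e2; ring.
have h3 : 2 * (j0 * j3) = 0 by apply: etrans e3; ring.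
have h4 : 2 * (j0 * j4) = 0 by apply: etrans e4; ring.
have h5 : 2 * (j0 * j5) = 0 by apply: etrans e5; ring.
have h6 : 2 * (j0 * j6) = 0 by apply: etrans e6; ring.
have h7 : 2 * (j0 * j7) = 0 by apply: etrans e7; ring.
have h0 : j0 ^+ 2 - (j1 ^+ 2 + j2 ^+ 2 + j3 ^+ 2 + j4 ^+ 2 + j5 ^+ 2 + j6 ^+ 2 + j7 ^+ 2) = -1
  by apply: etrans e0; ring.
have J0 : j0 = 0.
  apply/eqP/negPn/negP => nz.
  have z : forall t, 2 * (j0 * t) = 0 -> t = 0.
    by move=> t /eqP; rewrite mulf_eq0 (negbTE two_neq0) /= mulf_eq0 (negbTE nz) /= => /eqP.
  move: h0; rewrite (z _ h1) (z _ h2) (z _ h3) (z _ h4) (z _ h5) (z _ h6) (z _ h7).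
  move=> h; have : 0 <= j0 ^+ 2 by exact: sqr_ge0.
  lra.
split=> //. move: h0; rewrite J0. lra.
Qed.

Lemma sph_opp J : Sph J -> Sph (oopp J).
Proof. rewrite /Sph => <-. octd J. oring. Qed.

Lemma omul_oppl J y : omul (oopp J) y = oopp (omul J y).
Proof. octd J; octd y; oring. Qed.

Lemma addsub_cancel (u v u' v' : oct R) :
  oadd u v = oadd u' v' -> oadd u (oopp v) = oadd u' (oopp v') -> u = u' /\ v = v'.
Proof.
octd u; octd v; octd u'; octd v'. ored.
case=> e0 e1 e2 e3 e4 e5 e6 e7; case=> f0 f1 f2 f3 f4 f5 f6 f7.
split; congr (Oct (Quat _ _ _ _) (Quat _ _ _ _)); lra.
Qed.

Lemma omul_cancel I u v : Sph I -> omul I u = omul I v -> u = v.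
Proof.
move=> HI h; have := congr1 (omul I) h; rewrite !alt HI.
have E : forall y, omul (oreal (-1)) y = oopp y by move=> y; octd y; oring.
rewrite !E => h2; have := congr1 (@oopp R) h2.
have K : forall y, oopp (oopp y) = y by move=> y; octd y; oring.
by rewrite !K.
Qed.

Definition G1 c (X a b : R) := oreal (a ^+ 2 + b ^+ 2 - 2 * a * q0 (oa c) + X).
Definition G2 c (a b : R) := oscale b (osub c (oconj c)).

Lemma G_stem c X : stem (G1 c X) (G2 c).
Proof. split=> a b; rewrite /G1 /G2. by rewrite sqrrN. octd c; oring. Qed.

Lemma nrm_slice J a b : Sph J -> odot (oadd (oreal a) (oscale b J)) (oadd (oreal a) (oscale b J)) = a ^+ 2 + b ^+ 2.
Proof.
move=> /sph_coords [h0 h1].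
have -> : odot (oadd (oreal a) (oscale b J)) (oadd (oreal a) (oscale b J)) = a ^+ 2 + b ^+ 2 * im2 J
   + q0 (oa J) * (2 * a * b + b ^+ 2 * q0 (oa J)).
  move: J {h0 h1}; case=> [[j0 j1 j2 j3] [j4 j5 j6 j7]]; rewrite odotE /im2; ored; ring.
by rewrite h0 h1 mul0r addr0 mulr1.
Qed.

Lemma G_induced I xi : induced (gIxi I xi) (G1 (projI I xi) (odot xi xi)) (G2 (projI I xi)).
Proof.
move=> a b J HJ. rewrite /gIxi !onorm2 nrm_slice //.
move: (projI I xi) (odot xi xi) => c X.
have [h0 _] := sph_coords HJ.
rewrite /G1 /G2.
move: J HJ h0; case=> [[j0 j1 j2 j3] [j4 j5 j6 j7]] _; pr => ->.
octd c; oring.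
Qed.

Lemma uniq_stem I (g : oct R -> oct R) F1 F2 H1 H2 : Sph I ->
  induced g F1 F2 -> induced g H1 H2 -> forall a b, F1 a b = H1 a b /\ F2 a b = H2 a b.
Proof.
move=> HI hF hH a b.
have e1 := hF a b I HI; have e2 := hF a b _ (sph_opp HI).
have e3 := hH a b I HI; have e4 := hH a b _ (sph_opp HI).
rewrite e1 in e3; rewrite e2 in e4. rewrite !omul_oppl in e4.
have [-> h] := addsub_cancel e3 e4.
by split=> //; apply: omul_cancel HI h.
Qed.
Definition Nf c (X a b : R) := (a ^+ 2 + b ^+ 2 - 2 * a * q0 (oa c) + X) ^+ 2 - b ^+ 2 * (4 * im2 c).

Lemma normalG c X x : normalf (G1 c X) (G2 c) x = oreal (Nf c X (reR x) (onorm (oIm x))).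
Proof.
have s2 : forall a b, sprod2 (G1 c X) (G2 c) (cstem (G1 c X)) (cstem (G2 c)) a b = ozero R.
  move=> a b; rewrite /sprod2 /cstem /G1 /G2; octd c; oring.
have s1 : forall a b, sprod1 (G1 c X) (G2 c) (cstem (G1 c X)) (cstem (G2 c)) a b = oreal (Nf c X a b).
  move=> a b; rewrite /sprod1 /cstem /G1 /G2 /Nf /im2; clear s2; octd c; ored; congr (Oct (Quat _ _ _ _) (Quat _ _ _ _)); try ring.
rewrite /normalf /slice; lazy zeta.
case: eqP => [->|_]; rewrite s1 //.
rewrite s2. move: (oscale _ (oIm x)) => y. octd y. oring.
Qed.

Lemma pythag I xi : Sph I ->
  odot xi xi = odot (projI I xi) (projI I xi) + odot (perpI I xi) (perpI I xi).
Proof.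
move=> HI; have [h0 h1] := sph_coords HI.
rewrite /perpI /projI.
have -> : odot xi (oreal 1) = q0 (oa xi) by rewrite odotE; ored; ring.
have ht : odot xi I = q1 (oa xi) * q1 (oa I) + q2 (oa xi) * q2 (oa I) + q3 (oa xi) * q3 (oa I)
  + q0 (ob xi) * q0 (ob I) + q1 (ob xi) * q1 (ob I) + q2 (ob xi) * q2 (ob I) + q3 (ob xi) * q3 (ob I).
  by rewrite odotE h0; ring.
move: (odot xi I) ht => t ht.
move: I HI h0 h1 ht; case=> [[i0 i1 i2 i3] [i4 i5 i6 i7]] _; pr => -> h1 ht.
move: h1 ht; rewrite /im2; pr; case: xi => [[x0 x1 x2 x3] [x4 x5 x6 x7]]; rewrite !odotE; ored => h1 ht.
apply/eqP; rewrite -subr_eq0; apply/eqP.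
transitivity (2 * t * ((x1 * i1 + x2 * i2 + x3 * i3 + x4 * i4 + x5 * i5 + x6 * i6 + x7 * i7)
  - t * (i1 ^+ 2 + i2 ^+ 2 + i3 ^+ 2 + i4 ^+ 2 + i5 ^+ 2 + i6 ^+ 2 + i7 ^+ 2))).
  ring.
rewrite h1 -ht; ring.
Qed.

Lemma delta_id c x : odot (Delta c x) (Delta c x) =
  (odot x x - 2 * q0 (oa x) * q0 (oa c) + odot c c) ^+ 2 - 4 * im2 x * im2 c.
Proof.
rewrite /Delta onorm2 oReE.
case: c => [[c0 c1 c2 c3] [c4 c5 c6 c7]]; case: x => [[x0 x1 x2 x3] [x4 x5 x6 x7]].
rewrite !odotE /im2; ored. Time ring.
Qed.
Lemma sq0 (t : R) : t * t = 0 -> t = 0.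
Proof. by move/eqP; rewrite mulf_eq0 orbb => /eqP. Qed.

Lemma sqge (t : R) : 0 <= t * t.
Proof. by rewrite -expr2 sqr_ge0. Qed.

Lemma odot_eq0 y : odot y y = 0 -> y = ozero R.
Proof.
case: y => [[y0 y1 y2 y3] [y4 y5 y6 y7]]; rewrite odotE; ored => h.
have := sqge y0; have := sqge y1; have := sqge y2; have := sqge y3;
have := sqge y4; have := sqge y5; have := sqge y6; have := sqge y7 => ? ? ? ? ? ? ? ?.
congr (Oct (Quat _ _ _ _) (Quat _ _ _ _)); apply: sq0; lra.
Qed.

Lemma im2_eq0 x : im2 x = 0 -> x = oreal (q0 (oa x)).
Proof.
case: x => [[y0 y1 y2 y3] [y4 y5 y6 y7]]; rewrite /im2; ored => h.
have := sqge y1; have := sqge y2; have := sqge y3;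
have := sqge y4; have := sqge y5; have := sqge y6; have := sqge y7 => ? ? ? ? ? ? ?.
rewrite !expr2 in h.
congr (Oct (Quat _ _ _ _) (Quat _ _ _ _)); apply: sq0; lra.
Qed.

Lemma perp_zero I xi : odot (perpI I xi) (perpI I xi) = 0 -> projI I xi = xi.
Proof.
move/odot_eq0; rewrite /perpI; move: (projI I xi) => c.
case: c => [[c0 c1 c2 c3] [c4 c5 c6 c7]]; case: xi => [[x0 x1 x2 x3] [x4 x5 x6 x7]]; ored.
case=> *; congr (Oct (Quat _ _ _ _) (Quat _ _ _ _)); lra.
Qed.

Lemma inCI_proj I xi : Sph I -> inCI I xi -> projI I xi = xi.
Proof.
move=> HI [a [b ->]]; have [h0 h1] := sph_coords HI.
rewrite /projI.
move: I HI h0 h1 => [[i0 i1 i2 i3] [i4 i5 i6 i7]] _; rewrite /im2; pr => -> h1.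
have -> : odot (oadd (oreal a) (oscale b (Oct (Quat 0 i1 i2 i3) (Quat i4 i5 i6 i7)))) (oreal 1) = a.
  rewrite odotE; ored; ring.
have -> : odot (oadd (oreal a) (oscale b (Oct (Quat 0 i1 i2 i3) (Quat i4 i5 i6 i7))))
            (Oct (Quat 0 i1 i2 i3) (Quat i4 i5 i6 i7)) = b.
  transitivity (b * (i1 ^+ 2 + i2 ^+ 2 + i3 ^+ 2 + i4 ^+ 2 + i5 ^+ 2 + i6 ^+ 2 + i7 ^+ 2)).
    rewrite odotE; ored; ring.
  by rewrite h1 mulr1.
by [].
Qed.

Lemma of_Seta xi x : Seta xi x -> q0 (oa x) = q0 (oa xi) /\ im2 x = im2 xi.
Proof.
case=> J [HJ ->]; have [h0 h1] := sph_coords HJ.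
rewrite oReE.
have hs : onorm (oIm xi) ^+ 2 = im2 xi by rewrite onorm2 im2_oIm.
move: (onorm (oIm xi)) hs => s hs.
move: J HJ h0 h1 => [[i0 i1 i2 i3] [i4 i5 i6 i7]] _; pr => -> h1.
rewrite /im2 in h1; cbn [q0 q1 q2 q3 oa ob] in h1.
split. ored; ring.
rewrite -hs. transitivity (s ^+ 2 * (i1 ^+ 2 + i2 ^+ 2 + i3 ^+ 2 + i4 ^+ 2 + i5 ^+ 2 + i6 ^+ 2 + i7 ^+ 2)).
  rewrite /im2; ored; ring.
by rewrite h1 mulr1.
Qed.

Lemma Seta_of J0 xi x : Sph J0 -> q0 (oa x) = q0 (oa xi) -> im2 x = im2 xi -> Seta xi x.
Proof.
move=> HJ0 hx0 hx.
have hs : onorm (oIm xi) ^+ 2 = im2 xi by rewrite onorm2 im2_oIm.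
rewrite -hs in hx.
rewrite /Seta; move: (onorm (oIm xi)) hx => s hx.
case: (eqVneq s 0) => [s0|snz].
  exists J0; split=> //; rewrite s0.
  rewrite s0 expr0n /= in hx.
  rewrite {1}(im2_eq0 hx) hx0 oReE.
  move: (q0 (oa xi)) => r; clear HJ0; octd J0; oring.
exists (oscale s^-1 (oIm x)); split.
  rewrite /Sph oImE.
  move: x hx0 hx => [[y0 y1 y2 y3] [y4 y5 y6 y7]]; rewrite /im2; pr => _ hx; ored.
  congr (Oct (Quat _ _ _ _) (Quat _ _ _ _)); try ring.
  transitivity (- (s^-1 ^+ 2 * (y1 ^+ 2 + y2 ^+ 2 + y3 ^+ 2 + y4 ^+ 2 + y5 ^+ 2 + y6 ^+ 2 + y7 ^+ 2))).
    ring.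
  by rewrite hx exprVn mulVf // expf_neq0.
rewrite oReE oImE.
move: x hx0 hx => [[y0 y1 y2 y3] [y4 y5 y6 y7]]; pr => <- _; ored.
congr (Oct (Quat _ _ _ _) (Quat _ _ _ _)); try ring.
all: field; exact: snz.
Qed.

Lemma key (u B S P : R) : 0 <= u -> 0 <= B -> 0 <= S -> 0 <= P ->
  (u + B + S + P) ^+ 2 - B * (4 * S) = 0 -> u = 0 /\ P = 0 /\ B = S.
Proof.
move=> hu hB hS hP E.
have E2 : (u + P) ^+ 2 + 2 * (u + P) * (B + S) + (B - S) ^+ 2 = 0 by rewrite -E; ring.
have h1 : 0 <= (u + P) ^+ 2 := sqr_ge0 _.
have h2 : 0 <= 2 * (u + P) * (B + S) by rewrite !mulr_ge0 // addr_ge0.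
have h3 : 0 <= (B - S) ^+ 2 := sqr_ge0 _.
have e3 : (B - S) ^+ 2 = 0 by lra.
have e1 : (u + P) ^+ 2 = 0 by lra.
move/eqP: e1; rewrite sqrf_eq0 => /eqP e1.
move/eqP: e3; rewrite sqrf_eq0 subr_eq0 => /eqP e3.
split; [lra | split; [lra | exact: e3]].
Qed.
End S2.

Theorem lemma2p16 (R : rcfType) (I xi : oct R) :
  Sph I ->
  (* g_{I,xi} is a slice function *)
  (exists F1 F2 : R -> R -> oct R, stem F1 F2 /\ induced (gIxi I xi) F1 F2) /\
  (forall F1 F2 : R -> R -> oct R, stem F1 F2 -> induced (gIxi I xi) F1 F2 ->
    (* (1) *)
    (forall x : oct R,
       let c := projI I xi in
       let v := onorm (Delta c x) ^+ 2
                + 2 * onorm (perpI I xi) ^+ 2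
                    * (onorm x ^+ 2 - 2 * reR x * reR c + onorm c ^+ 2)
                + onorm (perpI I xi) ^+ 4 in
       normalf F1 F2 x = oreal v /\ 0 <= v) /\
    (* (2) *)
    (forall x : oct R, normalf F1 F2 x = ozero R <-> SIxi I xi x)).
Proof.
move=> HI.
split.
  exists (G1 (projI I xi) (odot xi xi)), (G2 (projI I xi)); split; [exact: G_stem | exact: G_induced].
move=> F1 F2 _ HF.
have U := uniq_stem HI HF (G_induced I xi).
have e1 : F1 = G1 (projI I xi) (odot xi xi).
  by apply: functional_extensionality => a; apply: functional_extensionality => b; exact: (U a b).1.
have e2 : F2 = G2 (projI I xi).
  by apply: functional_extensionality => a; apply: functional_extensionality => b; exact: (U a b).2.
rewrite e1 e2 {e1 e2 U HF}.
have NE : forall x, normalf (G1 (projI I xi) (odot xi xi)) (G2 (projI I xi)) x =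
  oreal ((q0 (oa x) ^+ 2 + im2 x - 2 * q0 (oa x) * q0 (oa (projI I xi)) + odot xi xi) ^+ 2
          - im2 x * (4 * im2 (projI I xi))).
  by move=> x; rewrite normalG /Nf reRE !onorm2 im2_oIm.
have PY := pythag xi HI.
have Pge := odot_ge0 (perpI I xi).
split.
  move=> x; lazy zeta.
  have -> : onorm (perpI I xi) ^+ 4 = (odot (perpI I xi) (perpI I xi)) ^+ 2.
    by rewrite -onorm2 -exprM.
  have hq : 0 <= onorm x ^+ 2 - 2 * reR x * reR (projI I xi) + onorm (projI I xi) ^+ 2.
    rewrite !onorm2 !odotxx !reRE.
    have -> : q0 (oa x) ^+ 2 + im2 x - 2 * q0 (oa x) * q0 (oa (projI I xi)) +
       (q0 (oa (projI I xi)) ^+ 2 + im2 (projI I xi)) =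
       (q0 (oa x) - q0 (oa (projI I xi))) ^+ 2 + im2 x + im2 (projI I xi) by ring.
    by rewrite !addr_ge0 ?sqr_ge0 ?im2_ge0.
  split; last first.
    apply: addr_ge0; last exact: sqr_ge0.
    apply: addr_ge0; first exact: sqr_ge0.
    apply: mulr_ge0 => //; apply: mulr_ge0 => //; exact: sqr_ge0.
  rewrite NE !onorm2 delta_id !reRE PY !odotxx.
  congr (oreal _); ring.
move=> x; rewrite NE PY odotxx.
set P := odot (perpI I xi) (perpI I xi).
have NN : (q0 (oa x) ^+ 2 + im2 x - 2 * q0 (oa x) * q0 (oa (projI I xi)) +
   (q0 (oa (projI I xi)) ^+ 2 + im2 (projI I xi) + P)) ^+ 2 - im2 x * (4 * im2 (projI I xi))
   = ((q0 (oa x) - q0 (oa (projI I xi))) ^+ 2 + im2 x + im2 (projI I xi) + P) ^+ 2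
     - im2 x * (4 * im2 (projI I xi)) by ring.
rewrite NN; split.
  move=> h.
  have h' : ((q0 (oa x) - q0 (oa (projI I xi))) ^+ 2 + im2 x + im2 (projI I xi) + P) ^+ 2
     - im2 x * (4 * im2 (projI I xi)) = 0.
    by move: h; move/(congr1 (fun z => q0 (oa z))); ored.
  have [hu [hP hB]] := key (sqr_ge0 _) (im2_ge0 x) (im2_ge0 _) Pge h'.
  have pc : projI I xi = xi := perp_zero hP.
  rewrite pc in hu hB.
  move/eqP: hu; rewrite sqrf_eq0 subr_eq0 => /eqP hu.
  split.
    exists (odot xi (oreal 1)), (odot xi I).
    by rewrite -{1}pc.
  exact: Seta_of HI hu hB.
case=> hC hS.
have pc := inCI_proj HI hC.
have [h0 hb] := of_Seta hS.
have hP : P = 0.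
  rewrite /P /perpI pc.
  case: xi {hC hS pc h0 hb PY Pge NE P NN} => [[y0 y1 y2 y3] [y4 y5 y6 y7]].
  rewrite odotE; ored; ring.
rewrite hP pc h0 hb /ozero; congr (oreal _); ring.
Qed.
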